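(* Let $\mu\in\mathbb F_q\setminus\{0\}$. Every line of $\mathcal W_0$ has $0$, $1$, $2$ or $q+1$ points in common with $\mathcal Q_\mu$, and each of these four values occurs for some line of $\mathcal W_0$.
   Context: Let $q$ be an even prime power and $n\ge 2$ an integer. Let $\mathrm{PG}(2n+1,q)$ have homogeneous coordinates $(X_1,\dots,X_{2n+2})$. Fix $\delta\in\mathbb F_q$ such that $X^2+X+\delta$ is irreducible over $\mathbb F_q$. For $\mu\in\mathbb F_q$ let $\mathcal Q_\mu$ be the elliptic quadric $X_1^2+X_1X_{2n+2}+\delta X_{2n+2}^2+\sum_{i=2}^{n+1}X_iX_{2n+3-i}+\mu(X_{2n}^2+X_{2n}X_{2n+1}+\delta X_{2n+1}^2)=0$. Let $\mathcal W_0$ be the symplectic polar space defined by the alternating form $B_0(X,Y)=\sum_{i=1}^{2n+2}X_iY_{2n+3-i}$; its lines are the totally isotropic lines. *)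

(* Defs.v *)
From HB Require Import structures.
From mathcomp Require Import all_boot all_order all_algebra all_field.
Set Implicit Arguments. Unset Strict Implicit. Unset Printing Implicit Defensive.
Import Order.TTheory GRing.Theory Num.Theory.
Local Open Scope ring_scope.

(* Vectors of F^(2n+2) are row vectors 'rV[F]_(n.*2.+2); the paper's
   coordinate X_i (1-based) is the 0-based coordinate i-1. *)
Definition crd (F : fieldType) (n : nat) (v : 'rV[F]_(n.*2.+2)) (i : nat) : F :=
  v ord0 (inord i).

Definition Qmu (F : fieldType) (n : nat) (delta mu : F) (v : 'rV[F]_(n.*2.+2)) : F :=
  let x := crd v in
  x 0%N ^+ 2 + x 0%N * x n.*2.+1 + delta * x n.*2.+1 ^+ 2
  + \sum_(1 <= i < n.+1) x i * x (n.*2.+1 - i)%N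
  + mu * (x n.*2.-1 ^+ 2 + x n.*2.-1 * x n.*2 + delta * x n.*2 ^+ 2).

Definition B0 (F : fieldType) (n : nat) (u v : 'rV[F]_(n.*2.+2)) : F :=
  \sum_(i < n.*2.+2) u ord0 i * v ord0 (rev_ord i).

Definition W0_line (F : fieldType) (n : nat) (L : 'M[F]_(2, n.*2.+2)) : Prop :=
  \rank L = 2%N /\
  forall u v : 'rV[F]_(n.*2.+2), (u <= L)%MS -> (v <= L)%MS -> B0 u v = 0.

(* The projective points of the line L lying on Q_mu; a projective point is
   represented by the (canonical) 1-dimensional subspace <<v>> it spans. *)
Definition line_quadric_points (F : finFieldType) (n : nat) (delta mu : F)
    (L : 'M[F]_(2, n.*2.+2)) : {set 'M[F]_(n.*2.+2)} :=
  [set (<<v>>%MS : 'M[F]_(n.*2.+2)) | v in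
     [set v : 'rV[F]_(n.*2.+2) | [&& v != 0, (v <= L)%MS & Qmu delta mu v == 0]]].

(* Main.v *)
Set Warnings "-notation-overridden,-ambiguous-paths,-deprecated".
Require Import Defs.
From HB Require Import structures.
From mathcomp Require Import all_boot all_order all_algebra all_field.
From mathcomp Require Import ring zify.
Set Implicit Arguments. Unset Strict Implicit. Unset Printing Implicit Defensive.
Import GRing.Theory.
Local Open Scope ring_scope.

Definition mkv (F : fieldType) (n : nat) (f : nat -> F) : 'rV[F]_(n.*2.+2) :=
  \row_j f (nat_of_ord j).

Lemma crd_mkv (F : fieldType) (n : nat) (f : nat -> F) i :
  (i < n.*2.+2)%N -> crd (mkv n f) i = f i.
Proof. by move=> hi; rewrite /crd /mkv mxE inordK. Qed.

Lemma crdD (F : fieldType) (n : nat) (u v : 'rV[F]_(n.*2.+2)) i :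
  crd (u + v) i = crd u i + crd v i.
Proof. by rewrite /crd mxE. Qed.

Lemma crdZ (F : fieldType) (n : nat) (a : F) (u : 'rV[F]_(n.*2.+2)) i :
  crd (a *: u) i = a * crd u i.
Proof. by rewrite /crd mxE. Qed.

Definition Bf (F : fieldType) (n : nat) (delta mu : F) (u w : 'rV[F]_(n.*2.+2)) : F :=
  let x := crd u in let y := crd w in
  x 0%N * y 0%N *+ 2 + (x 0%N * y n.*2.+1 + y 0%N * x n.*2.+1)
  + delta * (x n.*2.+1 * y n.*2.+1) *+ 2
  + \sum_(1 <= i < n.+1) (x i * y (n.*2.+1 - i)%N + y i * x (n.*2.+1 - i)%N)
  + mu * (x n.*2.-1 * y n.*2.-1 *+ 2 + (x n.*2.-1 * y n.*2 + y n.*2.-1 * x n.*2)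
          + delta * (x n.*2 * y n.*2) *+ 2).

Lemma Qmu_expand (F : fieldType) (n : nat) (delta mu a : F) (u w : 'rV[F]_(n.*2.+2)) :
  Qmu delta mu (u + a *: w) = Qmu delta mu u + a * Bf delta mu u w + a ^+ 2 * Qmu delta mu w.
Proof.
rewrite /Qmu /Bf /= !crdD !crdZ.
have -> : \sum_(1 <= i < n.+1) crd (u + a *: w) i * crd (u + a *: w) (n.*2.+1 - i)
  = \sum_(1 <= i < n.+1) crd u i * crd u (n.*2.+1 - i)
    + a * \sum_(1 <= i < n.+1) (crd u i * crd w (n.*2.+1 - i) + crd w i * crd u (n.*2.+1 - i))
    + a ^+ 2 * \sum_(1 <= i < n.+1) crd w i * crd w (n.*2.+1 - i).
  rewrite !mulr_sumr -!big_split; apply: eq_bigr => i _ /=.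
  rewrite !crdD !crdZ; ring.
ring.
Qed.

Lemma Qmu_scale (F : fieldType) (n : nat) (delta mu a : F) (u : 'rV[F]_(n.*2.+2)) :
  Qmu delta mu (a *: u) = a ^+ 2 * Qmu delta mu u.
Proof.
rewrite /Qmu /= !crdZ.
have -> : \sum_(1 <= i < n.+1) crd (a *: u) i * crd (a *: u) (n.*2.+1 - i)
  = a ^+ 2 * \sum_(1 <= i < n.+1) crd u i * crd u (n.*2.+1 - i).
  rewrite !mulr_sumr; apply: eq_bigr => i _ /=; rewrite !crdZ; ring.
ring.
Qed.
Lemma lift01 : lift ord0 (ord0 : 'I_1) = 1 :> 'I_2.
Proof. exact/val_inj. Qed.

Definition rep (F : fieldType) (n : nat) (L : 'M[F]_(2, n.*2.+2)) (o : option F)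
  : 'rV[F]_(n.*2.+2) :=
  match o with Some a => row 0 L + a *: row 1 L | None => row 1 L end.

Definition coef (F : fieldType) (o : option F) : 'rV[F]_2 :=
  match o with
  | Some a => \row_(j < 2) (if (j == 0 :> nat) then 1 else a)
  | None => \row_(j < 2) (if (j == 0 :> nat) then 0 else 1)
  end.

Lemma rep_coef (F : fieldType) (n : nat) (L : 'M[F]_(2, n.*2.+2)) o :
  rep L o = coef o *m L.
Proof.
rewrite mulmx_sum_row !big_ord_recl big_ord0 addr0.
by case: o => [a|] /=; rewrite !mxE /= ?scale1r ?scale0r ?add0r lift01.
Qed.

Lemma rep_inj (F : fieldType) (n : nat) (L : 'M[F]_(2, n.*2.+2)) :
  \rank L = 2%N -> injective (fun o => (<<rep L o>>%MS : 'M[F]_(n.*2.+2))).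
Proof.
move=> rk o1 o2 /= /genmxP/andP[/sub_rVP[c hc] _].
have rf : row_free L by rewrite /row_free rk.
move: hc; rewrite !rep_coef scalemxAl => /(row_free_inj rf) e.
have e0 := congr1 (fun M : 'rV[F]_2 => M 0 0) e.
have e1 := congr1 (fun M : 'rV[F]_2 => M 0 1) e.
move: e0 e1; clear e; case: o1 => [a1|]; case: o2 => [a2|] //=; rewrite !mxE /=.
- by rewrite mulr1 => <-; rewrite mul1r => ->.
- by rewrite mulr0 => /eqP; rewrite oner_eq0.
- by rewrite mulr1 => <-; rewrite mul0r => /eqP; rewrite oner_eq0.
Qed.

Lemma card_lqp (F : finFieldType) (n : nat) (delta mu : F) (L : 'M[F]_(2, n.*2.+2)) :
  \rank L = 2%N ->
  #|line_quadric_points delta mu L| = #|[set o | Qmu delta mu (rep L o) == 0]|.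
Proof.
move=> rk.
have -> : line_quadric_points delta mu L =
   [set (<<rep L o>>%MS : 'M[F]_(n.*2.+2)) | o in [set o | Qmu delta mu (rep L o) == 0]].
  apply/setP => P; apply/imsetP/imsetP => [[v] | [o]].
  - rewrite inE => /and3P[nz /submxP[D hvD] hq] ->.
    have hv : v = D 0 0 *: row 0 L + D 0 1 *: row 1 L.
      by rewrite hvD mulmx_sum_row !big_ord_recl big_ord0 addr0 lift01.
    move: nz hq; rewrite hv; clear hv hvD; move: (D 0 0) (D 0 1) => w0 w1 nz hq.
    have [w00|w0n] := eqVneq w0 0.
    + rewrite w00 scale0r add0r in nz hq *.
      have w1n : w1 != 0 by apply: contraNneq nz => ->; rewrite scale0r.
      exists None; first by move: hq; rewrite inE /= Qmu_scale mulf_eq0 expf_eq0 /= (negbTE w1n).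
      apply/genmxP; exact/eqmxP/eqmx_scale.
    + have hv : w0 *: row 0 L + w1 *: row 1 L = w0 *: rep L (Some (w1 / w0)).
        by rewrite /= scalerDr scalerA mulrC mulfVK.
      rewrite hv in nz hq *.
      exists (Some (w1 / w0)).
        by move: hq; rewrite inE Qmu_scale mulf_eq0 expf_eq0 /= (negbTE w0n).
      apply/genmxP; exact/eqmxP/eqmx_scale.
  - rewrite inE => hq ->; exists (rep L o) => //.
    rewrite inE hq andbT; apply/andP; split.
    + rewrite rep_coef; apply/eqP => h0.
      have rf : row_free L by rewrite /row_free rk.
      have := @row_free_inj _ _ _ _ L rf (coef o) 0; rewrite mul0mx h0 => /(_ erefl) /rowP.
      by case: o {hq h0} => [a /(_ 0)|/(_ 1)] /eqP; rewrite !mxE /= oner_eq0.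
    + by rewrite rep_coef submxMl.
rewrite card_in_imset //; move=> x y _ _; exact: rep_inj.
Qed.

Lemma roots_card (F : finFieldType) (m : nat) (E : nat -> F) :
  (exists2 i, (i < m)%N & E i != 0) ->
  (#|[set a : F | (\sum_(i < m) E i * a ^+ i == 0)%R]| < m)%N.
Proof.
move=> [i lti ne].
set p := \poly_(i < m) E i.
have pn : p != 0.
  apply: contraNneq ne => p0; have := coef_poly m E i; by rewrite lti -/p p0 coef0 => <-.
have := max_poly_roots pn (rs := enum [set a : F | \sum_(i < m) E i * a ^+ i == 0]).
rewrite enum_uniq -cardE => /(_ _ isT) h.
apply: leq_trans (h _) (size_poly _ _).
apply/allP => a; rewrite mem_enum inE /root horner_poly; exact.
Qed.

Lemma count_cases (F : finFieldType) (A B C : F) (f : option F -> F) :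
  (forall a, f (Some a) = A + a * B + a ^+ 2 * C) -> f None = C ->
  #|[set o | f o == 0]| \in [:: 0%N; 1%N; 2%N; #|F|.+1].
Proof.
move=> fS fN.
have [/and3P[A0 B0 C0]|nz] := boolP ([&& A == 0, B == 0 & C == 0]); last first.
  suff : (#|[set o | (f o == 0)%R]| <= 2)%N by case: #|_| => [|[|[|]]].
  pose R := [set a | f (Some a) == 0].
  have sub : [set o | f o == 0] \subset (if C == 0 then [set None] else set0) :|: (Some @: R).
    apply/subsetP => -[a|]; rewrite !inE => h.
      by apply/orP; right; apply/imsetP; exists a; rewrite ?inE.
    by rewrite -fN h inE.
  apply: leq_trans (subset_leq_card sub) _.
  apply: leq_trans (leq_card_setU _ _) _.
  rewrite card_imset; last by move=> x y [].
  have [C0|Cn] := eqVneq C 0.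
    rewrite cards1 add1n ltnS.
    have -> : R = [set a : F | \sum_(i < 2) [:: A; B]`_i * a ^+ i == 0].
      apply/setP => a; rewrite !inE fS C0 !big_ord_recl big_ord0 /= expr0 expr1; congr (_ == _); ring.
    have := roots_card (m := 2) (E := fun i => [:: A; B]`_i); apply => /=.
    move: nz; rewrite C0 eqxx andbT negb_and => /orP[hA|hB]; first by exists 0%N.
    by exists 1%N.
  rewrite cards0 add0n.
  have -> : R = [set a : F | \sum_(i < 3) [:: A; B; C]`_i * a ^+ i == 0].
    apply/setP => a; rewrite !inE fS !big_ord_recl big_ord0 /= expr0 expr1; congr (_ == _); ring.
  have := roots_card (m := 3) (E := fun i => [:: A; B; C]`_i); apply => /=.
  by exists 2%N.
suff -> : #|[set o | (f o == 0)%R]| = #|F|.+1 by rewrite !inE eqxx !orbT.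
rewrite -card_option; apply: eq_card => -[a|];
  by rewrite !inE ?fS ?fN ?(eqP A0) ?(eqP B0) ?(eqP C0) ?mulr0 ?addr0 ?eqxx.
Qed.

Definition mxL (F : fieldType) (n : nat) (f0 f1 : nat -> F) : 'M[F]_(2, n.*2.+2) :=
  \matrix_(i < 2, j < n.*2.+2) (if (i == 0 :> nat) then f0 j else f1 j).

Lemma rep_mxL (F : fieldType) (n : nat) (f0 f1 : nat -> F) o :
  rep (mxL n f0 f1) o =
  match o with Some a => mkv n (fun j => f0 j + a * f1 j) | None => mkv n f1 end.
Proof. by case: o => [a|]; apply/rowP => j; rewrite !mxE. Qed.

Lemma Qmu_mkv (F : fieldType) (n : nat) (delta mu : F) (h : nat -> F) :
  Qmu delta mu (mkv n h) =
  h 0%N ^+ 2 + h 0%N * h n.*2.+1 + delta * h n.*2.+1 ^+ 2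
  + \sum_(1 <= i < n.+1) h i * h (n.*2.+1 - i)%N
  + mu * (h n.*2.-1 ^+ 2 + h n.*2.-1 * h n.*2 + delta * h n.*2 ^+ 2).
Proof.
rewrite /Qmu !crd_mkv; try lia.
congr (_ + _ + _); apply: eq_big_nat => i /andP[h1 h2]; rewrite !crd_mkv //; lia.
Qed.

Lemma B0_mkv (F : fieldType) (n : nat) (f g : nat -> F) :
  B0 (mkv n f) (mkv n g) = \sum_(i < n.*2.+2) f i * g (n.*2.+1 - i)%N.
Proof. by apply: eq_bigr => i _; rewrite !mxE /= subSS. Qed.

Lemma B0_linl (F : fieldType) (n : nat) (a b : F) (x y z : 'rV[F]_(n.*2.+2)) :
  B0 (a *: x + b *: y) z = a * B0 x z + b * B0 y z.
Proof.
rewrite /B0 !mulr_sumr -big_split; apply: eq_bigr => i _ /=; rewrite !mxE; ring.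
Qed.

Lemma B0_linr (F : fieldType) (n : nat) (a b : F) (x y z : 'rV[F]_(n.*2.+2)) :
  B0 z (a *: x + b *: y) = a * B0 z x + b * B0 z y.
Proof.
rewrite /B0 !mulr_sumr -big_split; apply: eq_bigr => i _ /=; rewrite !mxE; ring.
Qed.

Lemma sub_rows (F : fieldType) (n : nat) (L : 'M[F]_(2, n.*2.+2)) u :
  (u <= L)%MS -> exists a b, u = a *: row 0 L + b *: row 1 L.
Proof.
move=> /submxP[D ->]; exists (D 0 0), (D 0 1).
by rewrite mulmx_sum_row !big_ord_recl big_ord0 addr0 lift01.
Qed.

Lemma iso_mxL (F : fieldType) (n : nat) (f0 f1 : nat -> F) :
  B0 (mkv n f0) (mkv n f0) = 0 -> B0 (mkv n f0) (mkv n f1) = 0 ->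
  B0 (mkv n f1) (mkv n f0) = 0 -> B0 (mkv n f1) (mkv n f1) = 0 ->
  forall u v, (u <= mxL n f0 f1)%MS -> (v <= mxL n f0 f1)%MS -> B0 u v = 0.
Proof.
move=> h00 h01 h10 h11 u v /sub_rows[a [b ->]] /sub_rows[c [d ->]].
have r0 : row 0 (mxL n f0 f1) = mkv n f0 by apply/rowP => j; rewrite !mxE.
have r1 : row 1 (mxL n f0 f1) = mkv n f1 by apply/rowP => j; rewrite !mxE.
rewrite r0 r1 !B0_linl !B0_linr h00 h01 h10 h11; ring.
Qed.

Lemma rank_mxL (F : fieldType) (n : nat) (f0 f1 : nat -> F) p0 p1 :
  (p0 < n.*2.+2)%N -> (p1 < n.*2.+2)%N ->
  f0 p0 = 1 -> f1 p0 = 0 -> f0 p1 = 0 -> f1 p1 = 1 ->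
  \rank (mxL n f0 f1) = 2%N.
Proof.
move=> h0 h1 a00 a10 a01 a11; apply/eqP; apply/row_freeP.
exists (\matrix_(j < n.*2.+2, k < 2) ((j : nat) == (if (k == 0 :> nat) then p0 else p1))%:R).
apply/matrixP => i k; rewrite !mxE.
under eq_bigr => j _ do rewrite !mxE.
have [pk [hpk epk]] : exists pk (hpk : (pk < n.*2.+2)%N),
    (if (k == 0 :> nat) then p0 else p1) = pk.
  by case: (k == 0 :> nat); [exists p0, h0 | exists p1, h1].
rewrite epk (bigD1 (Ordinal hpk)) //= big1 => [|j /negbTE]; last first.
  by rewrite -val_eqE /= => ->; rewrite mulr0.
rewrite eqxx mulr1 addr0 -epk.
by case: i => [[|[|?]] ?]; case: k {epk} => [[|[|?]] ?] //=.
Qed.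


Definition ev (F : fieldType) (k : nat) : nat -> F := fun j => if j == k then 1 else 0.

Ltac ifs := repeat match goal with |- context [(?x == ?y)%N] =>
  let H := fresh "H" in case: (@eqP _ x y) => H; try (exfalso; lia) end; cbv beta iota.

Lemma card_seq (T : finType) (P : pred T) (s : seq T) :
  uniq s -> (forall x, P x = (x \in s)) -> #|[set x | P x]| = size s.
Proof.
move=> us hP; rewrite -(card_uniqP us); apply: eq_card => x; by rewrite inE hP.
Qed.

Lemma no_root (F : fieldType) (delta a : F) :
  irreducible_poly ('X^2 + 'X + delta%:P : {poly F}) -> a ^+ 2 + a + delta != 0.
Proof.
move=> [sz irr]; apply/negP => /eqP r.
have hd : ('X - a%:P) %| ('X^2 + 'X + delta%:P : {poly F}).
  by rewrite dvdp_XsubCl /root !hornerE r.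
have := irr _ _ hd; rewrite size_XsubC => /(_ isT) /eqp_size.
by rewrite size_XsubC -addrA size_addl ?size_polyXn // size_XaddC.
Qed.

Ltac qval := rewrite rep_mxL Qmu_mkv big_nat_cond big1 => [|i /andP[/andP[? ?] _]];
  rewrite /ev; ifs; ring.

Ltac bval := rewrite B0_mkv; apply: big1 => i _; have := ltn_ord i; rewrite /ev => ?; ifs; ring.

Lemma lineK (F : finFieldType) (n : nat) (delta mu : F) : (2 <= n)%N ->
  W0_line (mxL n (ev F 1) (ev F 2)) /\
  #|line_quadric_points delta mu (mxL n (ev F 1) (ev F 2))| = #|F|.+1.
Proof.
move=> n2.
have rk : \rank (mxL n (ev F 1) (ev F 2)) = 2%N.
  by apply: (rank_mxL (p0 := 1) (p1 := 2)); rewrite /ev //=; lia.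
split; first by split => //; apply: iso_mxL; bval.
rewrite card_lqp // -card_option; apply: eq_card => o; rewrite inE.
have -> : Qmu delta mu (rep (mxL n (ev F 1) (ev F 2)) o) = 0 by case: o => [a|]; qval.
by rewrite eqxx.
Qed.

Lemma lineOne (F : finFieldType) (n : nat) (delta mu : F) : (2 <= n)%N ->
  W0_line (mxL n (ev F 0) (ev F 1)) /\
  #|line_quadric_points delta mu (mxL n (ev F 0) (ev F 1))| = 1%N.
Proof.
move=> n2.
have rk : \rank (mxL n (ev F 0) (ev F 1)) = 2%N.
  by apply: (rank_mxL (p0 := 0) (p1 := 1)); rewrite /ev //=; lia.
split; first by split => //; apply: iso_mxL; bval.
rewrite card_lqp // (@card_seq _ _ [:: None]) // => -[a|]; rewrite !inE /=.
  have -> : Qmu delta mu (rep (mxL n (ev F 0) (ev F 1)) (Some a)) = 1 by qval.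
  by rewrite oner_eq0.
have -> : Qmu delta mu (rep (mxL n (ev F 0) (ev F 1)) None) = 0 by qval.
by rewrite eqxx.
Qed.

Lemma lineZero (F : finFieldType) (n : nat) (delta mu : F) : (2 <= n)%N ->
  irreducible_poly ('X^2 + 'X + delta%:P : {poly F}) -> mu != 0 ->
  W0_line (mxL n (ev F n.*2) (ev F n.*2.-1)) /\
  #|line_quadric_points delta mu (mxL n (ev F n.*2) (ev F n.*2.-1))| = 0%N.
Proof.
move=> n2 irr mu0.
have rk : \rank (mxL n (ev F n.*2) (ev F n.*2.-1)) = 2%N.
  by apply: (rank_mxL (p0 := n.*2) (p1 := n.*2.-1)); rewrite /ev; ifs; try lia.
split; first by split => //; apply: iso_mxL; bval.
rewrite card_lqp // (@card_seq _ _ [::]) // => -[a|]; rewrite ?inE /=.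
  have -> : Qmu delta mu (rep (mxL n (ev F n.*2) (ev F n.*2.-1)) (Some a))
     = mu * (a ^+ 2 + a + delta) by qval.
  by rewrite mulf_eq0 (negbTE mu0) (negbTE (no_root a irr)).
have -> : Qmu delta mu (rep (mxL n (ev F n.*2) (ev F n.*2.-1)) None) = mu by qval.
by rewrite (negbTE mu0).
Qed.

Definition ft (F : fieldType) (n : nat) (c : F) : nat -> F :=
  fun j => if j == n.*2 then 1 else if j == 1%N then c else 0.

Lemma lineTwo (F : finFieldType) (n : nat) (delta mu : F) :
  2%N \in [pchar F] -> (2 <= n)%N -> mu != 0 ->
  W0_line (mxL n (ft n (- (mu * delta))) (ev F n.*2.-1)) /\
  #|line_quadric_points delta mu (mxL n (ft n (- (mu * delta))) (ev F n.*2.-1))| = 2%N.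
Proof.
move=> hc n2 mu0.
have h2 : (2%:R : F) = 0 := pcharf0 hc.
set c := - (mu * delta).
have rk : \rank (mxL n (ft n c) (ev F n.*2.-1)) = 2%N.
  by apply: (rank_mxL (p0 := n.*2) (p1 := n.*2.-1)); rewrite /ev /ft; ifs; try lia.
split.
  split => //; apply: iso_mxL; rewrite /ft; try bval.
  rewrite B0_mkv.
  have l1 : (1 < n.*2.+2)%N by lia.
  have l2 : (n.*2 < n.*2.+2)%N by lia.
  rewrite (bigD1 (Ordinal l1)) // (bigD1 (Ordinal l2)) /=; last by rewrite -val_eqE /=; apply/eqP; lia.
  rewrite big1 => [|i /andP[m1 m2]].
    ifs; transitivity (c * 2%:R); [ring | by rewrite h2 mulr0].
  move: m1 m2; rewrite -!val_eqE /= => /eqP ? /eqP ?; have := ltn_ord i => ?; ifs; ring.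
rewrite card_lqp // (@card_seq _ _ [:: Some 0; Some (-1)]) //; last first.
  move=> -[a|]; rewrite ?inE.
    have -> : Qmu delta mu (rep (mxL n (ft n c) (ev F n.*2.-1)) (Some a))
       = mu * (a * (a + 1)).
      rewrite rep_mxL Qmu_mkv big_ltn; last by lia.
      rewrite big_nat_cond big1 => [|i /andP[/andP[? ?] _]]; rewrite /ev /ft; ifs; rewrite /c; ring.
    rewrite mulf_eq0 (negbTE mu0) mulf_eq0 /= addr_eq0.
    by rewrite !(inj_eq (@Some_inj _)).
  have -> : Qmu delta mu (rep (mxL n (ft n c) (ev F n.*2.-1)) None) = mu.
    by rewrite rep_mxL Qmu_mkv big_nat_cond big1 => [|i /andP[/andP[? ?] _]]; rewrite /ev; ifs; ring.
  by rewrite (negbTE mu0).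
by rewrite /= andbT inE (inj_eq (@Some_inj _)) eq_sym oppr_eq0 oner_eq0.
Qed.

Unset Implicit Arguments.

Theorem mainTheorem8 (F : finFieldType) (n : nat) (delta mu : F) :
  2%N \in [pchar F] ->
  (2 <= n)%N ->
  irreducible_poly ('X^2 + 'X + delta%:P : {poly F}) ->
  mu != 0 ->
  (forall L : 'M[F]_(2, n.*2.+2), W0_line L ->
     #|line_quadric_points delta mu L| \in [:: 0%N; 1%N; 2%N; #|F|.+1]) /\
  (forall k, k \in [:: 0%N; 1%N; 2%N; #|F|.+1] ->
     exists L : 'M[F]_(2, n.*2.+2), W0_line L /\ #|line_quadric_points delta mu L| = k).
Proof.
move=> hc n2 irr mu0; split.
  move=> L [rk _]; rewrite card_lqp //.
  apply: (@count_cases _ (Qmu delta mu (row 0 L)) (Bf delta mu (row 0 L) (row 1 L))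
            (Qmu delta mu (row 1 L))) => // a.
  exact: Qmu_expand.
move=> k; rewrite !inE => /or4P[] /eqP ->.
- by eexists; apply: lineZero.
- by eexists; apply: lineOne.
- by eexists; apply: lineTwo.
- by eexists; apply: lineK.
Qed.
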